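(* Let $(X_1,d_1),\dots,(X_{n+1},d_{n+1})$ be metric spaces, $f_i:X_i\to X_{i+1}$ for $i=1,\dots,n$, $\Pi=f_n\circ\cdots\circ f_1$, and let $\delta_i$ be a decision map defined on $X_{i+1}$. Suppose each layer $i$ is certified with gain $g_i\in\mathbb{Q}_{\ge0}$ and margin $m_i\in\mathbb{Q}_{\ge0}$, meaning: for all $x,x'\in X_i$ with $d_i(x,x')<m_i$, both $d_{i+1}(f_i(x),f_i(x'))\le g_i\,d_i(x,x')$ and $\delta_i(f_i(x))=\delta_i(f_i(x'))$. Let $\varepsilon_0\ge0$, define $\varepsilon^\star_1=\varepsilon_0$ and $\varepsilon^\star_{i+1}=g_i\varepsilon^\star_i$, and assume $\varepsilon^\star_i<m_i$ for every $i=1,\dots,n$. Then for all $x_0,x'\in X_1$ with $d_1(x_0,x')<\varepsilon_0$, $\delta_n(\Pi(x'))=\delta_n(\Pi(x_0))$.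
   Context: A pipeline layer is a map between metric spaces together with a discrete decision read off its output; ''certified with gain $g$ and margin $m$'' means it is $g$-Lipschitz on pairs of inputs at distance less than $m$ and its discrete decision is invariant for such pairs (nominal stability). The conclusion is invariance of the final layer's discrete decision (equivalently of the canonicalized output if the pipeline ends in a canonicalization step). *)

(* Defs.v *)
From Stdlib Require Import Reals QArith Qreals.
Open Scope R_scope.

Record MetricSpace := {
  carrier :> Type;
  mdist : carrier -> carrier -> R;
  dist_nonneg : forall x y, 0 <= mdist x y;
  dist_self : forall x, mdist x x = 0;
  dist_eq0 : forall x y, mdist x y = 0 -> x = y;
  dist_sym : forall x y, mdist x y = mdist y x;
  dist_tri : forall x y z, mdist x z <= mdist x y + mdist y z
}.

Arguments mdist {m} _ _.

Definition certified (A B : MetricSpace) (D : Type) (f : A -> B)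
  (delta : B -> D) (g m : Q) : Prop :=
  forall x x' : A, mdist x x' < Q2R m ->
    mdist (f x) (f x') <= Q2R g * mdist x x' /\ delta (f x) = delta (f x').

Fixpoint pipe (X : nat -> MetricSpace) (f : forall i, X i -> X (S i)) (k : nat)
  : X 0%nat -> X k :=
  match k with
  | O => fun x => x
  | S k' => fun x => f k' (pipe X f k' x)
  end.

Fixpoint eps_star (g : nat -> Q) (eps0 : R) (i : nat) : R :=
  match i with
  | O => eps0
  | S i' => Q2R (g i') * eps_star g eps0 i'
  end.

(* Main.v *)
Require Import Defs.
From Stdlib Require Import Reals QArith Qreals.
From Stdlib Require Import Lra Lia.
Open Scope R_scope.

(* 0-based indexing: layers i = 0..n (i.e. n+1 >= 1 layers), spaces X 0 .. X (n+1),
   f i : X i -> X (i+1), delta i : X (i+1) -> D i. *)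
Theorem mainTheorem6
  (n : nat) (X : nat -> MetricSpace) (f : forall i, X i -> X (S i))
  (D : nat -> Type) (delta : forall i, X (S i) -> D i)
  (g m : nat -> Q)
  (hg : forall i, (i <= n)%nat -> (0 <= g i)%Q)
  (hm : forall i, (i <= n)%nat -> (0 <= m i)%Q)
  (hcert : forall i, (i <= n)%nat -> certified (X i) (X (S i)) (D i) (f i) (delta i) (g i) (m i))
  (eps0 : R) (heps0 : 0 <= eps0)
  (hmargin : forall i, (i <= n)%nat -> eps_star g eps0 i < Q2R (m i)) :
  forall x0 x' : X 0%nat, mdist x0 x' < eps0 ->
    delta n (pipe X f (S n) x') = delta n (pipe X f (S n) x0).
Proof.
  intros x0 x' hd.
  assert (Hk : forall k, (k <= S n)%nat ->
    mdist (pipe X f k x0) (pipe X f k x') <= eps_star g eps0 k).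
  { induction k as [|k IH]; intros hk.
    - simpl. lra.
    - assert (hkn : (k <= n)%nat) by lia.
      specialize (IH ltac:(lia)).
      assert (hlt : mdist (pipe X f k x0) (pipe X f k x') < Q2R (m k))
        by (specialize (hmargin k hkn); lra).
      destruct (hcert k hkn _ _ hlt) as [h1 _].
      assert (hg0 : 0 <= Q2R (g k)).
      { rewrite <- RMicromega.Q2R_0. apply Qle_Rle. apply hg; exact hkn. }
      simpl. eapply Rle_trans; [exact h1|].
      apply Rmult_le_compat_l; assumption. }
  assert (hn := Hk n ltac:(lia)).
  assert (hlt : mdist (pipe X f n x') (pipe X f n x0) < Q2R (m n)).
  { rewrite Defs.dist_sym. specialize (hmargin n (le_n n)). lra. }
  destruct (hcert n (le_n n) _ _ hlt) as [_ h2].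
  simpl. exact h2.
Qed.
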